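(* Let $d\ge 3$ and $h\ge 1$. The order of the sandpile group $G(d,h)$ is $$|G(d,h)| = d(d-1)^h\,[\theta(d,h+1)]^{d-1}\prod_{n=1}^{h-1}[\theta(d,h+1-n)]^{(d-2)d(d-1)^{n-1}},$$ where $\theta(d,n) := \frac{(d-1)^n-1}{d-2}$.
   Context: Let $\mathcal{T}(d,h)$ be the rooted tree in which the root $0$ has $d$ children, every vertex at distance $1,\dots,h-1$ from the root has $d-1$ children, and the vertices at distance $h$ are leaves. Let $V$ be its vertex set, $A$ its adjacency matrix, $\Delta := dI-A$, and $\Lambda\subset\mathbb{Z}^V$ the lattice spanned by the rows of $\Delta$. Then $G(d,h):=\mathbb{Z}^V/\Lambda$. *)

(* Defs.v *)
From HB Require Import structures.
From mathcomp Require Import all_boot all_order all_algebra.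
Set Implicit Arguments. Unset Strict Implicit. Unset Printing Implicit Defensive.
Import Order.TTheory GRing.Theory Num.Theory.

(* Vertices of T(d,h) are encoded as address sequences from the root:
   root = [::]; children of the root: [:: i], i < d;
   children of a non-root vertex s: rcons s j, j < d-1. *)
Fixpoint level (d k : nat) : seq (seq nat) :=
  match k with
  | 0 => [:: [::]]
  | k'.+1 =>
      match k' with
      | 0 => [seq [:: i] | i <- iota 0 d]
      | _ => [seq rcons s j | s <- level d k', j <- iota 0 d.-1]
      end
  end.

Definition verts (d h : nat) : seq (seq nat) :=
  flatten [seq level d k | k <- iota 0 h.+1].

Definition V (d h : nat) : finType := seq_sub (verts d h).

Definition child (u v : seq nat) : bool :=
  (v != [::]) && (take (size v).-1 v == u).

Definition adj d h (u v : V d h) : bool :=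
  child (ssval u) (ssval v) || child (ssval v) (ssval u).

Local Open Scope ring_scope.

Definition Delta d h (u v : V d h) : int :=
  (d%:Z * (u == v)%:Z) - (adj u v)%:Z.

Definition in_Lambda d h (x : V d h -> int) : Prop :=
  exists c : V d h -> int, forall w, x w = \sum_(v : V d h) c v * Delta v w.

(* The group G(d,h) = Z^V / Lambda has exactly N elements: there is a
   family of N representatives, one for each coset. *)
Definition sandpile_order_is d h (N : nat) : Prop :=
  exists r : 'I_N -> (V d h -> int),
    (forall x : V d h -> int, exists i, in_Lambda (fun w => x w - r i w)) /\
    (forall i j, in_Lambda (fun w => r i w - r j w) -> i = j).

Local Close Scope ring_scope.

(* theta(d,n) = ((d-1)^n - 1)/(d-2)  (exact division for d >= 3) *)
Definition theta (d n : nat) : nat := ((d - 1) ^ n - 1) %/ (d - 2).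

Definition order_formula (d h : nat) : nat :=
  d * (d - 1) ^ h * (theta d h.+1) ^ (d - 1) *
  \prod_(1 <= n < h) (theta d (h + 1 - n)) ^ ((d - 2) * d * (d - 1) ^ (n - 1)).

(* Main.v *)
Require Import Defs.
From mathcomp Require Import all_boot all_order all_algebra.
From mathcomp Require Import zify ring lra.
Set Implicit Arguments. Unset Strict Implicit. Unset Printing Implicit Defensive.
Import Order.TTheory GRing.Theory Num.Theory.

Lemma level_size d k : all (fun s => size s == k) (level d k).
Proof.
elim: k => [|k IH] //=.
case: k IH => [|k] IH.
  by apply/allP => s /mapP [i _ ->].
apply/allP => s /allpairsP [[x j] [/= xin _ ->]].
by rewrite size_rcons; move/allP: IH => /(_ x xin) /eqP ->.
Qed.

Lemma level_sizeP d k s : s \in level d k -> size s = k.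
Proof. by move=> sin; move/allP: (level_size d k) => /(_ s sin) /eqP. Qed.

Lemma level_uniq d k : uniq (level d k).
Proof.
elim: k => [|k IH] //=.
case: k IH => [|k] IH.
  by rewrite map_inj_uniq ?iota_uniq // => i j [].
apply: allpairs_uniq => //; first exact: iota_uniq.
move=> [x j] [y l] _ _ /= E.
by case/rcons_inj: E => -> ->.
Qed.

Lemma size_level d k : size (level d k) = if k == 0 then 1 else d * (d.-1) ^ k.-1.
Proof.
elim: k => [|k IH] //=.
case: k IH => [|k] IH.
  by rewrite /= size_map size_iota expn0 muln1.
by rewrite size_allpairs IH size_iota /= expnSr mulnA.
Qed.

Lemma verts_sizeP d h s : s \in verts d h -> size s <= h.
Proof.
move/flattenP => [l /mapP [k kin ->] sin].
by rewrite (level_sizeP sin); move: kin; rewrite mem_iota.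
Qed.

Lemma verts_level d h s : s \in verts d h -> s \in level d (size s).
Proof.
move/flattenP => [l /mapP [k kin ->] sin].
by rewrite (level_sizeP sin).
Qed.

Lemma verts_uniq d h : uniq (verts d h).
Proof.
rewrite /verts; elim: h => [|h IH]; first by [].
rewrite -addn1 iotaD map_cat flatten_cat cat_uniq IH.
have -> : flatten [seq level d k | k <- iota (0 + h.+1) 1] = level d h.+1.
  by rewrite add0n /= cats0.
rewrite level_uniq andbT.
apply/hasPn => s sin; apply/negP => /flatten_mapP [k kin sin'].
move: kin; rewrite mem_iota add0n => /andP [_ kh].
by move: (level_sizeP sin) (level_sizeP sin') => -> E; rewrite E ltnn in kh.
Qed.

Lemma verts_index d h u v : u \in verts d h -> v \in verts d h -> size u < size v ->
  index u (verts d h) < index v (verts d h).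
Proof.
move=> uin vin lt.
have vh := verts_sizeP vin.
have E : verts d h = flatten [seq level d k | k <- iota 0 (size v)] ++
   flatten [seq level d k | k <- iota (size v) (h.+1 - size v)].
  by rewrite /verts -flatten_cat -map_cat -iotaD (subnKC (leqW vh)).
have uA : u \in flatten [seq level d k | k <- iota 0 (size v)].
  apply/flatten_mapP; exists (size u); last exact: (verts_level uin).
  by rewrite mem_iota.
have vA : v \notin flatten [seq level d k | k <- iota 0 (size v)].
  apply/negP => /flatten_mapP [k kin sin].
  by move: kin; rewrite mem_iota (level_sizeP sin) ltnn andbF.
rewrite E !index_cat uA (negbTE vA).
by apply: leq_trans (leq_addr _ _); rewrite index_mem.
Qed.

Lemma child_rcons x j u : child u (rcons x j) = (x == u).
Proof.
rewrite /child size_rcons /= -cats1 take_size_cat //.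
by case: x.
Qed.

Lemma child_size u v : child u v -> size v = (size u).+1.
Proof.
case/andP => ne /eqP <-; rewrite size_take.
by case: v ne => //= a v _; rewrite ltnSn.
Qed.

Lemma child_uniq u w v : child u v -> child w v -> u = w.
Proof. by case/andP => _ /eqP <- /andP [_ /eqP <-]. Qed.

Lemma sumn_pred1 (T : eqType) (s : seq T) u m :
  sumn [seq (x == u) * m | x <- s] = count (pred1 u) s * m.
Proof. by elim: s => //= x s ->; rewrite mulnDl. Qed.

Lemma count_child_level d k u : u \in level d (size u) ->
  count (child u) (level d k) =
  if k == (size u).+1 then (if size u == 0 then d else d.-1) else 0.
Proof.
move=> uin.
case: eqP => Ek; last first.
  apply/eqP; rewrite -leqn0 leqNgt -has_count; apply/hasPn => s sin.
  apply/negP => /child_size; rewrite (level_sizeP sin) => Es; exact: Ek.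
subst k.
case: (size u) uin => [|k] uin.
  move: uin; rewrite inE => /eqP ->.
  rewrite /= count_map (eq_count (a2 := predT)) ?count_predT ?size_iota //.
have -> : level d k.+2 = [seq rcons s j | s <- level d k.+1, j <- iota 0 d.-1] by [].
rewrite count_flatten -map_comp.
rewrite (eq_map (g := fun x => (x == u) * d.-1)); last first.
  move=> x /=; rewrite count_map (eq_count (a2 := fun _ => x == u)); last first.
    by move=> j /=; rewrite child_rcons.
  case: (x == u); first by rewrite count_predT size_iota mul1n.
  by rewrite mul0n; elim: (iota 0 d.-1).
by rewrite sumn_pred1 (count_uniq_mem _ (level_uniq d k.+1)) uin mul1n.
Qed.

Lemma sumn_map0 (T : eqType) (f : T -> nat) (s : seq T) :
  (forall x, x \in s -> f x = 0) -> sumn (map f s) = 0.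
Proof.
elim: s => //= x s IH H; rewrite H ?mem_head // IH // => y ys.
by apply: H; rewrite inE ys orbT.
Qed.

Lemma count_child_verts d h u : u \in verts d h ->
  count (child u) (verts d h) =
  if size u == h then 0 else if size u == 0 then d else d.-1.
Proof.
move=> uin; have uh := verts_sizeP uin; have ul := verts_level uin.
rewrite /verts count_flatten -map_comp.
rewrite (eq_map (g := fun k => if k == (size u).+1 then (if size u == 0 then d else d.-1) else 0)); last first.
  by move=> k /=; rewrite count_child_level.
set c := (if size u == 0 then d else d.-1).
case: (size u =P h) => Eh.
  apply: sumn_map0.
  by move=> k; rewrite mem_iota Eh add0n /= => kh; rewrite ifN // neq_ltn kh.
have sl : (size u).+1 < h.+1 by rewrite ltnS ltn_neqAle uh andbT; apply/eqP.
have -> : iota 0 h.+1 = iota 0 (size u).+1 ++ (size u).+1 :: iota (size u).+2 (h - (size u).+1).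
  rewrite -[h.+1](subnKC (ltnW sl)) iotaD add0n; congr (_ ++ _).
  by rewrite subSS; case E: (h - size u) => [|m]; [lia | rewrite /= subnS E].
rewrite map_cat sumn_cat (@sumn_map0 _ _ (iota 0 (size u).+1)); last first.
  by move=> k; rewrite mem_iota add0n => /andP [_ kh]; rewrite ifN // neq_ltn kh.
rewrite map_cons /= eqxx sumn_map0 ?addn0 //.
by move=> k; rewrite mem_iota => /andP [kh _]; rewrite ifN // neq_ltn kh orbT.
Qed.

Close Scope ring_scope.
Local Open Scope ring_scope.

Lemma int_unit_abs (x : int) : x \is a GRing.unit -> `|x|%N = 1%N.
Proof. by case/orP => /eqP ->. Qed.

Lemma absz_prod n (f : 'I_n -> int) : absz (\prod_i f i) = (\prod_i absz (f i))%N.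
Proof. exact: (big_morph _ abszM (erefl _)). Qed.

Lemma small_dvd (a b : nat) (z e : int) : (a < `|z|)%N -> (b < `|z|)%N ->
  a%:Z - b%:Z = e * z -> a = b.
Proof.
move=> ha hb E.
have := congr1 absz E; rewrite abszM => E2.
case: (posnP `|e|%N) => He.
  by move: E; move/eqP: He; rewrite absz_eq0 => /eqP ->; rewrite mul0r; lia.
have : (`|z| <= `|e| * `|z|)%N by rewrite leq_pmull.
rewrite -E2; lia.
Qed.

Lemma card_dffun_ord n (a : 'I_n -> nat) :
  #|{dffun forall i : 'I_n, 'I_(a i)}| = (\prod_(i < n) a i)%N.
Proof.
rewrite card_dep_ffun foldr_map [index_enum _]unlock -enumT.
by elim: (enum _) => [|i s IH]; rewrite ?big_nil ?big_cons //= IH card_ord.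
Qed.

Lemma row_split n (y : 'rV[int]_n) (dl : seq int) :
  (forall i : 'I_n, dl`_i != 0) ->
  y - \row_i ((absz (modz (y 0%R i) (dl`_i)))%:Z) =
  (\row_i (divz (y 0%R i) (dl`_i))) *m diag_mx (\row_i dl`_i).
Proof.
move=> nz; apply/matrixP => i j; rewrite ord1 mul_mx_diag !mxE.
rewrite gez0_abs ?modz_ge0 //.
by rewrite {1}(divz_eq (y 0 j) dl`_j) addrK.
Qed.

Lemma quot_card n (M : 'M[int]_n) : \det M != 0 ->
  exists r : 'I_(absz (\det M)) -> 'rV[int]_n,
   (forall x, exists i, exists c, x - r i = c *m M) /\
   (forall i j, (exists c, r i - r j = c *m M) -> i = j).
Proof.
move=> dM.
case: (int_Smith_normal_form M) => L uL [R uR [dl _ EM]].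
set dv := \row_(i < n) dl`_i.
have ED : \matrix_(i, j) (dl`_i *+ (i == j :> nat)) = diag_mx dv.
  by apply/matrixP => i j; rewrite !mxE.
rewrite ED in EM.
have detM : \det M = \det L * (\prod_(i < n) dl`_i) * \det R.
  rewrite EM !det_mulmx det_diag; congr (_ * _ * _).
  by apply: eq_bigr => i _; rewrite mxE.
have nz : forall i : 'I_n, dl`_i != 0.
  move=> i; apply: contra dM => /eqP z.
  by rewrite detM (bigD1 i) //= z mul0r mulr0 mul0r.
pose a (i : 'I_n) := absz (dl`_i).
have absM : absz (\det M) = (\prod_(i < n) a i)%N.
  rewrite detM !abszM absz_prod.
  rewrite (int_unit_abs (x := \det L)) ?(int_unit_abs (x := \det R)) -?unitmxE //.
  by rewrite mul1n muln1.
pose F := {dffun forall i : 'I_n, 'I_(a i)}.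
have cardF : #|F| = absz (\det M) by rewrite absM card_dffun_ord.
pose rep (f : F) : 'rV[int]_n := (\row_i ((f i : nat)%:Z)) *m R.
exists (fun k => rep (enum_val (cast_ord (esym cardF) k))).
split.
- move=> x.
  pose y := x *m invmx R.
  have fi : forall i : 'I_n, (absz (modz (y 0%R i) (dl`_i)) < a i)%N.
    move=> i; have := ltz_mod (y 0 i) (nz i); have := modz_ge0 (y 0 i) (nz i).
    rewrite /a; lia.
  pose f : F := [ffun i => Ordinal (fi i)].
  exists (cast_ord cardF (enum_rank f)).
  rewrite cast_ordK enum_rankK.
  exists ((\row_i (divz (y 0 i) (dl`_i))) *m invmx L).
  rewrite EM !mulmxA mulmxKV // /rep.
  have -> : x = y *m R by rewrite /y mulmxKV.
  rewrite -mulmxBl -row_split //; congr (_ *m _); congr (_ - _).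
  by apply/rowP => j; rewrite [LHS]mxE [RHS]mxE /f ffunE.
- move=> i j [c Ec].
  set fi := enum_val _ in Ec; set fj := enum_val _ in Ec.
  suff E : fi = fj.
    by apply: (@cast_ord_inj _ _ (esym cardF)); apply: enum_val_inj.
  have E2 : \row_k ((fi k : nat)%:Z) - \row_k ((fj k : nat)%:Z) = (c *m L) *m diag_mx dv.
    have := congr1 (mulmx^~ (invmx R)) Ec.
    by rewrite /rep -mulmxBl EM !mulmxA !mulmxK.
  apply/ffunP => k; apply/val_inj.
  have := congr1 (fun m : 'rV[int]_n => m 0 k) E2; rewrite mul_mx_diag !mxE.
  apply: small_dvd; exact: ltn_ord.
Qed.

Close Scope ring_scope.

Section Enum.
Variables d h : nat.
Local Notation T := (V d h).
Local Notation n := #|T|.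
Local Open Scope ring_scope.

Lemma map_val_enum : map (@ssval _ (verts d h)) (enum T) = verts d h.
Proof. by rewrite enumT unlock val_seq_sub_enum // verts_uniq. Qed.

Lemma val_ev (k : 'I_n) : index (ssval (enum_val k)) (verts d h) = k.
Proof.
rewrite -[X in index _ X]map_val_enum index_map; last exact: val_inj.
rewrite (enum_val_nth (enum_val k)) index_uniq ?enum_uniq //.
by rewrite -cardE ltn_ord.
Qed.

Lemma ev_in (k : 'I_n) : ssval (enum_val k) \in verts d h.
Proof. exact: ssvalP. Qed.

Lemma sum_ev (R : nmodType) (G : 'I_n -> R) :
  \sum_(v : T) G (enum_rank v) = \sum_(k < n) G k.
Proof.
rewrite (reindex (@enum_rank T)) //.
by exists enum_val => x _; [rewrite enum_rankK | rewrite enum_valK].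
Qed.

Lemma sum_verts (R : nmodType) (G : seq nat -> R) :
  \sum_(k < n) G (ssval (enum_val k)) = \sum_(x <- verts d h) G x.
Proof.
rewrite -sum_ev.
rewrite -[X in _ = \big[_/_]_(_ <- X) _]map_val_enum big_map big_enum /=.
by apply: eq_bigr => v _; rewrite enum_rankK.
Qed.

Lemma prod_verts (R : comNzRingType) (G : seq nat -> R) :
  \prod_(k < n) G (ssval (enum_val k)) = \prod_(x <- verts d h) G x.
Proof.
rewrite (reindex (@enum_rank T)) /=; last first.
  by exists enum_val => x _; [rewrite enum_rankK | rewrite enum_valK].
rewrite -[X in _ = \big[_/_]_(_ <- X) _]map_val_enum big_map big_enum /=.
by apply: eq_bigr => v _; rewrite enum_rankK.
Qed.

End Enum.

Fixpoint thn (d m : nat) : nat := if m is m'.+1 then (d.-1 * thn d m' + 1)%N else 0%N.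

Lemma thnS d m : thn d m.+1 = (d.-1 * thn d m + 1)%N.
Proof. by []. Qed.
Lemma thn0 d : thn d 0 = 0%N.
Proof. by []. Qed.
Arguments thn : simpl never.

Lemma thn_pos d m : (0 < m)%N -> (0 < thn d m)%N.
Proof. by case: m => // m _; rewrite thnS addn1. Qed.

Lemma thn_pow d m : (2 < d)%N -> (d.-1 ^ m = (d - 2) * thn d m + 1)%N.
Proof.
move=> hd; elim: m => [|m IH]; first by rewrite expn0 thn0 muln0.
rewrite expnS IH thnS; case: d hd {IH} => [|[|[|d]]] //= _.
rewrite !mulnDr !muln1 !mulnA; lia.
Qed.

Lemma theta_thn d m : (2 < d)%N -> theta d m = thn d m.
Proof.
move=> hd; rewrite /theta [(d - 1)%N]subn1 thn_pow // addnK mulKn //.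
lia.
Qed.

Local Open Scope ring_scope.

Definition cs (d h k : nat) : rat :=
  if k == 0%N then (d * d.-1 ^ h)%N%:R / (thn d h.+1)%:R
  else (thn d (h - k).+2)%:R / (thn d (h - k).+1)%:R.

Lemma cs_pos d h k : (2 < d)%N -> 0 < cs d h k.
Proof.
move=> hd; rewrite /cs; case: eqP => _; apply: divr_gt0; rewrite ltr0n ?thn_pos //.
by rewrite muln_gt0 expn_gt0; case: d hd => [|[|d]].
Qed.

Lemma cs_key d h u : (2 < d)%N -> (1 <= h)%N -> u \in verts d h ->
  cs d h (size u) + (count (child u) (verts d h))%:R / cs d h (size u).+1 = d%:R.
Proof.
move=> hd hh uin; rewrite count_child_verts //.
have uh := verts_sizeP uin.
have Ed : d%:R = (d.-1)%:R + 1 :> rat.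
  by rewrite natr1 prednK //; lia.
have Ed2 : (d - 2)%:R = (d.-1)%:R - 1 :> rat.
  by rewrite natrB; [rewrite Ed; ring | lia].
rewrite /cs /=.
case: (size u =P h) => Eh.
  rewrite Eh ifN; last by rewrite -lt0n.
  by rewrite mul0r addr0 subnn !thnS thn0 !muln0 !add0n !muln1 divr1 addn1 prednK //; lia.
set k := size u in Eh uh *.
case: (k =P 0%N) => E0.
  rewrite E0 /=.
  have Eh1 : ((h - 1).+1 = h)%N by lia.
  rewrite Eh1.
  have t0 := thn_pos d hh.
  rewrite natrM (thn_pow h hd) natrD natrM !thnS !natrD !natrM Ed2 Ed.
  set t := (thn d h)%:R; set e := (d.-1)%:R.
  have t0' : t != 0 by rewrite pnatr_eq0 -lt0n.
  have e0 : e * t + 1 != 0.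
    by rewrite -natrM natr1 pnatr_eq0.
  field; by rewrite ?t0' ?e0.
have Ehk : (h - k = (h - k.+1).+1)%N.
  have : k != h by apply/eqP.
  lia.
rewrite Ehk.
set m := (h - k.+1)%N.
have t0 := thn_pos d (ltn0Sn m).
set e := (d.-1)%:R : rat.
set t := (thn d m.+1)%:R : rat.
have E2 : (thn d m.+2)%:R = e * t + 1 by rewrite thnS natrD natrM.
have E3 : (thn d m.+3)%:R = e * (e * t + 1) + 1 by rewrite thnS natrD natrM E2.
rewrite E2 E3 Ed -/e.
have t0' : t != 0 by rewrite pnatr_eq0 -lt0n.
have e0 : e * t + 1 != 0 by rewrite -E2 pnatr_eq0 -lt0n thn_pos.
field; by rewrite ?t0' ?e0.
Qed.

Lemma sum_delta n (i : 'I_n) (G : 'I_n -> rat) : \sum_k (i == k)%:R * G k = G i.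
Proof.
rewrite (bigD1 i) //= eqxx mul1r big1 ?addr0 // => k /negbTE.
by rewrite eq_sym => ->; rewrite mul0r.
Qed.

Lemma sum_count (s : seq (seq nat)) (P : pred (seq nat)) :
  \sum_(x <- s) (P x)%:R = (count P s)%:R :> rat.
Proof.
by elim: s => [|x s IH]; rewrite ?big_nil ?big_cons //= IH natrD.
Qed.

Section Det.
Variables (d h : nat).
Hypotheses (hd : (2 < d)%N) (hh : (1 <= h)%N).
Local Notation T := (V d h).
Local Notation n := #|T|.

Definition vs (k : 'I_n) : seq nat := ssval (enum_val k).
Definition cc (k : 'I_n) : rat := cs d h (size (vs k)).
Definition Lm : 'M[rat]_n :=
  \matrix_(i, j) ((i == j)%:R - (child (vs i) (vs j))%:R / cc j).
Definition Dm : 'M[rat]_n := diag_mx (\row_i cc i).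
Definition Mx : 'M[int]_n := \matrix_(i, j) Delta (enum_val i) (enum_val j).

Lemma vs_inj i j : vs i = vs j -> i = j.
Proof. by move=> E; apply: ord_inj; rewrite -!val_ev -/(vs _) -/(vs _) E. Qed.

Lemma cc_neq0 k : cc k != 0.
Proof. by rewrite gt_eqF // cs_pos. Qed.

Lemma Mq_eq : map_mx intr Mx = Lm *m Dm *m Lm^T.
Proof.
apply/matrixP => i j.
rewrite mul_mx_diag !mxE.
under eq_bigr => k _.
  rewrite !mxE.
  have -> : ((i == k)%:R - (child (vs i) (vs k))%:R / cc k) * cc k *
            ((j == k)%:R - (child (vs j) (vs k))%:R / cc k) =
    (i == k)%:R * ((j == k)%:R * cc k - (child (vs j) (vs k))%:R)
    - (j == k)%:R * (child (vs i) (vs k))%:R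
    + (child (vs i) (vs k) && child (vs j) (vs k))%:R / cc k.
    have := cc_neq0 k; case: (i == k); case: (j == k);
    case: (child (vs i) (vs k)); case: (child (vs j) (vs k)) => /= c0;
    by field.
  over.
rewrite !big_split /= sum_delta sumrN.
rewrite (eq_bigr (fun k => (j == k)%:R * (child (vs i) (vs k))%:R)) //.
rewrite sum_delta.
have nself : forall k, child (vs k) (vs k) = false.
  by move=> k; apply/negP => /child_size; lia.
rewrite /Delta /adj -/(vs i) -/(vs j).
case: (eqVneq i j) => [<-|neq].
  rewrite eqxx nself /= subr0 !addr0 mulr1.
  rewrite (eq_bigr (fun k => (child (vs i) (vs k))%:R / cs d h (size (vs i)).+1)); last first.
    move=> k _; rewrite andbb; case E: (child (vs i) (vs k)); last by rewrite !mul0r.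
    by rewrite /cc (child_size E).
  rewrite -mulr_suml (@sum_verts d h _ (fun x => (child (vs i) x)%:R)) sum_count.
  by rewrite mul1r /cc cs_key //; exact: ev_in.
rewrite big1; last first.
  move=> k _; case E1: (child (vs i) (vs k)); case E2: (child (vs j) (vs k)); rewrite /= ?mul0r //.
  by move: neq; rewrite (vs_inj (child_uniq E1 E2)) eqxx.
have -> : (enum_val i == enum_val j) = false.
  by apply/negbTE; apply: contra neq => /eqP /enum_val_inj ->.
rewrite mul0r sub0r.
case E1: (child (vs i) (vs j)); case E2: (child (vs j) (vs i)) => /=.
- by move: (child_size E1) (child_size E2); lia.
- by rewrite mulr0 rmorphB /= rmorph0 rmorph1; ring.
- by rewrite mulr0 rmorphB /= rmorph0 rmorph1; ring.
- by rewrite mulr0 rmorphB /= rmorph0; ring.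
Qed.

End Det.

Close Scope ring_scope.

Lemma telescope (a e : nat -> nat) H : 1 <= H -> (forall k, e k <= e k.+1) ->
  a 1 ^ e 1 * (\prod_(2 <= k < H.+1) a k ^ (e k - e k.-1)) *
    \prod_(1 <= k < H.+1) a k.+1 ^ e k =
  (\prod_(1 <= k < H.+1) a k ^ e k) * a H.+1 ^ e H.
Proof.
move=> hH he; elim: H hH => [//|H IH] hH.
case: H IH hH => [|H] IH _.
  by rewrite !big_nat1 big_geq // muln1.
rewrite (@big_nat_recr _ _ _ H.+2 2) // (@big_nat_recr _ _ _ H.+2 1) //.
rewrite (@big_nat_recr _ _ _ H.+2 1) //.
set Q := \prod_(2 <= k < H.+2) _; set Pb := \prod_(1 <= k < H.+2) _.
set Pa := \prod_(1 <= k < H.+2) _.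
have IH' := IH isT.
rewrite /= -/Q -/Pb -/Pa in IH'.
have -> : a 1 ^ e 1 * (Q * a H.+2 ^ (e H.+2 - e H.+1)) * (Pb * a H.+3 ^ e H.+2) =
   (a 1 ^ e 1 * Q * Pb) * a H.+2 ^ (e H.+2 - e H.+1) * a H.+3 ^ e H.+2.
  by rewrite !mulnA; congr (_ * _); rewrite mulnAC.
rewrite IH' -(mulnA Pa) -expnD subnKC //.
Qed.


Section Final.
Variables (d h : nat).
Hypotheses (hd : 2 < d) (hh : 1 <= h).

Definition aa k := thn d (h.+2 - k).
Definition ee k := d * d.-1 ^ k.-1.

Lemma formula_nat :
  order_formula d h * (aa 1 * \prod_(1 <= k < h.+1) aa k.+1 ^ ee k) =
  d * d.-1 ^ h * \prod_(1 <= k < h.+1) aa k ^ ee k.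
Proof.
have he : forall k, ee k <= ee k.+1.
  move=> k; rewrite /ee leq_pmul2l ?(ltn_trans _ hd) //.
  case: k => [|k] /=; first by [].
  rewrite expnS leq_pmull //; lia.
have T := telescope aa hh he.
have a1 : aa h.+1 = 1 by rewrite /aa subSnn thnS thn0 muln0.
rewrite a1 exp1n muln1 in T.
rewrite -T /order_formula.
have -> : \prod_(1 <= n < h) theta d (h + 1 - n) ^ ((d - 2) * d * (d - 1) ^ (n - 1)) =
          \prod_(2 <= k < h.+1) aa k ^ (ee k - ee k.-1).
  rewrite (big_addn 1 h.+1 1) [(h.+1 - 1)]subn1 /=.
  apply: eq_big_nat => i /andP [i1 ih].
  rewrite /aa theta_thn //.
  have -> : (h.+2 - (i + 1) = h + 1 - i)%N by lia.
  congr (_ ^ _).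
  rewrite /ee addn1 /=.
  case: i i1 {ih} => [//|i] _.
  rewrite [(i.+1 - 1)%N]subn1 /= [(d - 1)%N]subn1 expnS.
  set x := d.-1 ^ i.
  rewrite [((d - 2) * d)%N]mulnC -mulnA -mulnBr; congr (_ * _).
  rewrite -[X in _ = _ - X]mul1n -mulnBl; congr (_ * _); lia.
have -> : theta d h.+1 = aa 1 by rewrite theta_thn // /aa subn1.
have -> : ee 1 = d by rewrite /ee expn0 muln1.
rewrite [(d - 1)%N]subn1.
have -> : aa 1 ^ d = aa 1 ^ d.-1 * aa 1.
  by rewrite -expnSr prednK //; case: d hd.
set A := aa 1; set Q := \prod_(2 <= k < h.+1) _; set Pb := \prod_(1 <= k < h.+1) _.
set c := d.-1 ^ h; set P := A ^ d.-1.
nia.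
Qed.

End Final.

Close Scope ring_scope.
Local Open Scope ring_scope.

Lemma prod_const_seq (R : comNzRingType) (I : Type) (s : seq I) (c : R) :
  \prod_(x <- s) c = c ^+ size s.
Proof. by elim: s => [|x s IH]; rewrite ?big_nil ?big_cons ?expr0 //= IH exprS. Qed.

Section Fin.
Variables (d h : nat).
Hypotheses (hd : (2 < d)%N) (hh : (1 <= h)%N).
Local Open Scope ring_scope.

Lemma aa_pos k : (k <= h.+1)%N -> (0 < aa d h k)%N.
Proof. by move=> kh; rewrite /aa thn_pos //; lia. Qed.

Lemma det_prod : \prod_(k < #|V d h|) cc k = (order_formula d h)%:R.
Proof.
rewrite /cc /vs (@prod_verts d h _ (fun x => cs d h (size x))).
rewrite /verts big_flatten big_map.
rewrite (eq_big_seq (fun k => cs d h k ^+ size (level d k))); last first.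
  move=> k _; rewrite (eq_big_seq (fun _ => cs d h k)) ?prod_const_seq //.
  by move=> x /level_sizeP ->.
have -> : iota 0 h.+1 = 0%N :: iota 1 h by [].
rewrite big_cons size_level /= expr1.
have -> : \prod_(k <- iota 1 h) cs d h k ^+ size (level d k) =
   \prod_(1 <= k < h.+1) ((aa d h k)%:R / (aa d h k.+1)%:R) ^+ ee d k.
  rewrite /index_iota subSS subn0; apply: eq_big_seq => k.
  rewrite mem_iota => /andP [k1 kh].
  rewrite size_level ifN; last by rewrite -lt0n.
  rewrite /cs ifN; last by rewrite -lt0n.
  rewrite /aa /ee; have -> : (h.+2 - k = (h - k).+2)%N by lia.
  by have -> : (h.+2 - k.+1 = (h - k).+1)%N by lia.
under eq_bigr => k _ do rewrite expr_div_n -!natrX.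
rewrite prodf_div -!natr_prod.
set Pa := (\prod_(1 <= k < h.+1) _)%N; set Pb := (\prod_(1 <= k < h.+1) _)%N.
have Pb0 : (0 < Pb)%N.
  rewrite /Pb big_seq; apply: prodn_cond_gt0 => k; rewrite mem_index_iota => kh.
  by rewrite expn_gt0 aa_pos //; lia.
have A0 : (0 < aa d h 1)%N by apply: aa_pos.
have Enat := formula_nat hd hh; rewrite -/Pa -/Pb in Enat.
have -> : cs d h 0 = (d * d.-1 ^ h)%:R / (aa d h 1)%:R.
  by rewrite /cs /aa /= subn1.
apply: (mulIf (x := (aa d h 1 * Pb)%:R)).
  by rewrite pnatr_eq0 -lt0n muln_gt0 A0 Pb0.
rewrite -natrM Enat !natrM.
have A0' : (aa d h 1)%:R != 0 :> rat by rewrite pnatr_eq0 -lt0n.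
have Pb0' : Pb%:R != 0 :> rat by rewrite pnatr_eq0 -lt0n.
field; by rewrite ?A0' ?Pb0'.
Qed.

Lemma detLm : \det (Lm d h) = 1.
Proof.
rewrite -det_tr det_trig.
  apply: big1 => k _; rewrite !mxE eqxx.
  have -> : child (vs k) (vs k) = false by apply/negP => /child_size; lia.
  by rewrite mul0r subr0.
apply/is_trig_mxP => a b ab; rewrite !mxE.
have -> : (b == a) = false by apply/negbTE; rewrite neq_ltn ab orbT.
case E: (child (vs b) (vs a)); first last.
  by rewrite mul0r subr0.
exfalso.
have := verts_index (ev_in b) (ev_in a); rewrite (child_size E) ltnSn => /(_ isT).
rewrite /vs !val_ev; lia.
Qed.

Lemma det_Mx : \det (Mx d h) = (order_formula d h)%:Z.
Proof.
apply/eqP; rewrite -(eqr_int rat); apply/eqP.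
rewrite -det_map_mx (Mq_eq hd hh) !det_mulmx det_tr detLm mul1r mulr1 det_diag.
have -> : (order_formula d h)%:~R = (order_formula d h)%:R :> rat by [].
rewrite -det_prod; apply: eq_bigr => k _; by rewrite mxE.
Qed.

Lemma order_pos : (0 < order_formula d h)%N.
Proof.
have : 0 < \prod_(k < #|V d h|) cc k.
  by apply: prodr_gt0 => k _; apply: cs_pos.
by rewrite det_prod ltr0n.
Qed.

End Fin.

Close Scope ring_scope.

Theorem theorem2p5 (d h : nat) (hd : 3 <= d) (hh : 1 <= h) :
  sandpile_order_is d h (order_formula d h).
Proof.
have hd' : (2 < d)%N by [].
Local Open Scope ring_scope.
have nz : (\det (Mx d h) != 0)%R.
  by rewrite (det_Mx hd' hh) -lt0n order_pos.
move: (quot_card nz); rewrite (det_Mx hd' hh) /= => -[r [H1 H2]].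
exists (fun i w => r i 0%R (enum_rank w)).
split.
- move=> x.
  have [i [c Ec]] := H1 (\row_k x (enum_val k)).
  exists i; exists (fun v => c 0%R (enum_rank v)) => w.
  have := congr1 (fun m : 'rV[int]_#|V d h| => m 0%R (enum_rank w)) Ec.
  rewrite !mxE enum_rankK => ->.
  rewrite -(@sum_ev d h _ (fun k => c 0%R k * Mx d h k (enum_rank w))).
  by apply: eq_bigr => v _; rewrite !mxE !enum_rankK.
- move=> i j [c Ec]; apply: H2; exists (\row_k c (enum_val k)).
  apply/rowP => k; rewrite !mxE.
  have := Ec (enum_val k); rewrite enum_valK => ->.
  rewrite -(@sum_ev d h _ (fun k' => (\row_k0 c (enum_val k0)) 0%R k' * Mx d h k' k)).
  by apply: eq_bigr => v _; rewrite !mxE !enum_rankK.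
Qed.

Close Scope ring_scope.
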